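(* Let $\alpha\in(0,1]$, $0\le a<b$, and let $f:[a,b]\to\mathbb{R}$ be $\alpha$-fractional differentiable with $m\le D_\alpha f\le M$ on $[a,b]$ for some real numbers $m<M$. Let $$ \ell=\frac{\alpha(b-a)}{(b^\alpha-a^\alpha)(M-m)}\left(f(b)-f(a)-m\,\frac{b^\alpha-a^\alpha}{\alpha}\right). $$ Then $$ \frac m2\left(\frac{b^\alpha-a^\alpha}{\alpha}\right)^2+\frac{M-m}{2}\left(\frac{b^\alpha-(b-\ell)^\alpha}{\alpha}\right)^2\le\int_a^b f(t)\,d_\alpha t-f(a)\frac{b^\alpha-a^\alpha}{\alpha} $$ $$ \le\frac M2\left(\frac{b^\alpha-a^\alpha}{\alpha}\right)^2+\frac{m-M}{2}\left(\frac{b^\alpha-(a+\ell)^\alpha}{\alpha}\right)^2. $$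
   Context: The conformable $\alpha$-fractional derivative is $D_\alpha f(t):=\lim_{\varepsilon\to 0}\frac{f(t+\varepsilon t^{1-\alpha})-f(t)}{\varepsilon}$ for $t>0$, $D_\alpha f(0):=\lim_{t\to0^+}D_\alpha f(t)$. Integrals: $\int_a^b h(t)\,d_\alpha t:=\int_a^b h(t)t^{\alpha-1}\,dt$.
   Formalization: f is also right-continuous at a, so f(t) → f(a) as t → a⁺, which adds content only when a = 0. Apart from conventions, each condition added here is assumed in the paper as well or is needed for the statement above to hold. *)

(* Defs.v *)
From Stdlib Require Import Reals.
From Coquelicot Require Import Coquelicot.
Open Scope R_scope.

(* x^y for x >= 0 (and y > 0): 0^y = 0, otherwise exp (y ln x). *)
Definition rpow (x y : R) : R := if Rle_dec x 0 then 0 else Rpower x y.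

(* Conformable alpha-derivative of f : [a,b] -> R at a point t > 0 of [a,b]:
   lim_{eps -> 0} (f (t + eps t^(1-alpha)) - f t) / eps, where eps ranges over
   nonzero values keeping t + eps t^(1-alpha) inside [a,b] (f only lives on [a,b]). *)
Definition conf_deriv_pos (alpha a b : R) (f : R -> R) (t l : R) : Prop :=
  filterlim (fun eps => (f (t + eps * rpow t (1 - alpha)) - f t) / eps)
    (within (fun eps => eps <> 0 /\ a <= t + eps * rpow t (1 - alpha) <= b)
       (locally 0))
    (locally l).

(* D_alpha f (t) = l on [a,b]; at t = 0 (only possible when a = 0) it is defined
   as lim_{t -> 0+} D_alpha f (t). *)
Definition conf_deriv (alpha a b : R) (f : R -> R) (t l : R) : Prop :=
  (0 < t /\ conf_deriv_pos alpha a b f t l) \/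
  (t = 0 /\ (forall s, 0 < s <= b -> exists ls, conf_deriv_pos alpha a b f s ls) /\
   exists D : R -> R,
     (forall s, 0 < s <= b -> conf_deriv_pos alpha a b f s (D s)) /\
     filterlim D (at_right 0) (locally l)).

Definition conf_differentiable_on (alpha a b : R) (f : R -> R) : Prop :=
  forall t, a <= t <= b -> exists l, conf_deriv alpha a b f t l.

(* Main.v *)
Require Import Defs.
From Stdlib Require Import Reals Lra.
From Coquelicot Require Import Coquelicot.
Open Scope R_scope.

Lemma ballR x e y : ball x e y <-> Rabs (y - x) < e.
Proof. unfold ball; simpl; unfold AbsRing_ball, abs, minus, plus, opp; simpl. tauto. Qed.

Ltac unb H := unfold ball in H; simpl in H; unfold AbsRing_ball, abs, minus, plus, opp in H; simpl in H.
Ltac unbg := unfold ball; simpl; unfold AbsRing_ball, abs, minus, plus, opp; simpl.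

Lemma rpow_pos x y : 0 < x -> rpow x y = Rpower x y.
Proof. intros; unfold rpow; destruct (Rle_dec x 0); [lra|auto]. Qed.

Lemma rpow_nonpos x y : x <= 0 -> rpow x y = 0.
Proof. intros; unfold rpow; destruct (Rle_dec x 0); [auto|lra]. Qed.

Lemma Rpower_gt0 x y : 0 < Rpower x y.
Proof. unfold Rpower; apply exp_pos. Qed.

Lemma rpow_ge0 x y : 0 <= rpow x y.
Proof. unfold rpow; destruct (Rle_dec x 0); [lra| left; apply Rpower_gt0]. Qed.

Lemma rpow_derive x p : 0 < x -> is_derive (fun t => rpow t p) x (p * Rpower x (p - 1)).
Proof.
  intros Hx. apply is_derive_ext_loc with (fun t => Rpower t p).
  - exists (mkposreal x Hx). intros y Hy. apply ballR in Hy. simpl in Hy.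
    unb Hy. apply Rabs_lt_between in Hy. symmetry; apply rpow_pos. lra.
  - apply is_derive_Reals. apply derivable_pt_lim_power; auto.
Qed.

Lemma rpow_cont p x : 0 < p -> continuous (fun t => rpow t p) x.
Proof.
  intros Hp. destruct (Rlt_or_le 0 x) as [Hx|Hx].
  - exact (ex_derive_continuous (fun t => rpow t p) x (ex_intro _ _ (rpow_derive x p Hx))).
  - destruct Hx as [Hx|Hx].
    + apply continuous_ext_loc with (fun _ => 0).
      * exists (mkposreal (-x) ltac:(lra)). intros y Hy. unb Hy.
        apply Rabs_lt_between in Hy. rewrite rpow_nonpos; lra.
      * apply continuous_const.
    + subst x. apply filterlim_locally. intros eps.
      exists (mkposreal (Rpower eps (1/p)) (Rpower_gt0 _ _)). intros y Hy.
      unb Hy. unbg. rewrite (rpow_nonpos 0); [|lra].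
      destruct (Rle_or_lt y 0) as [Hy0|Hy0].
      * rewrite rpow_nonpos; auto. rewrite Ropp_0, Rplus_0_r, Rabs_R0. apply cond_pos.
      * rewrite rpow_pos; auto. rewrite Ropp_0, Rplus_0_r, Rabs_pos_eq; [|left; apply Rpower_gt0].
        rewrite Ropp_0, Rplus_0_r, Rabs_pos_eq in Hy by lra.
        apply Rlt_le_trans with (Rpower (Rpower eps (1/p)) p).
        -- apply Rlt_Rpower_l; auto.
        -- rewrite Rpower_mult. replace (1/p*p) with 1 by (field; lra).
           rewrite Rpower_1; [lra| apply cond_pos].
Qed.

Lemma exp_le' x y : x <= y -> exp x <= exp y.
Proof. intros [H|H]; [left; apply exp_increasing; auto| subst; lra]. Qed.

Lemma Rpower_le_neg c y e : 0 < c -> c <= y -> e <= 0 -> Rpower y e <= Rpower c e.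
Proof.
  intros Hc Hcy He. unfold Rpower. apply exp_le'.
  assert (ln c <= ln y) by (apply ln_le; auto). nra.
Qed.

Lemma rpow_mono x y p : 0 < p -> 0 <= x <= y -> rpow x p <= rpow y p.
Proof.
  intros Hp [Hx Hxy]. destruct Hx as [Hx|Hx].
  - rewrite !rpow_pos by lra. apply Rle_Rpower_l; lra.
  - subst. rewrite (rpow_nonpos 0) by lra. apply rpow_ge0.
Qed.

Lemma rpow_smono x y p : 0 < p -> 0 <= x < y -> rpow x p < rpow y p.
Proof.
  intros Hp [Hx Hxy]. destruct Hx as [Hx|Hx].
  - rewrite !rpow_pos by lra. apply Rlt_Rpower_l; lra.
  - subst. rewrite (rpow_nonpos 0) by lra. rewrite rpow_pos by lra. apply Rpower_gt0.
Qed.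

Lemma rpow_rpow x p q : 0 <= x -> rpow (rpow x p) q = rpow x (p * q).
Proof.
  intros [Hx|Hx].
  - rewrite (rpow_pos x p) by auto. rewrite (rpow_pos (Rpower x p)) by apply Rpower_gt0.
    rewrite rpow_pos by auto. apply Rpower_mult.
  - subst. rewrite !(rpow_nonpos 0); lra.
Qed.

Lemma rpow_1 x : 0 <= x -> rpow x 1 = x.
Proof. intros [Hx|Hx]. rewrite rpow_pos, Rpower_1; auto. subst; apply rpow_nonpos; lra. Qed.

Lemma psi_phi al t : 0 < al -> 0 <= t -> rpow (al * (rpow t al / al)) (1/al) = t.
Proof.
  intros Ha Ht. replace (al * (rpow t al / al)) with (rpow t al) by (field; lra).
  rewrite rpow_rpow; auto. replace (al * (1/al)) with 1 by (field; lra). apply rpow_1; auto.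
Qed.

Lemma phi_psi al u : 0 < al -> 0 <= u -> rpow (rpow (al * u) (1/al)) al / al = u.
Proof.
  intros Ha Hu. rewrite rpow_rpow by nra. replace (1/al*al) with 1 by (field; lra).
  rewrite rpow_1 by nra. field; lra.
Qed.

Lemma rpow_inv x p : 0 < x -> rpow x (p-1) * rpow x (1-p) = 1.
Proof.
  intros Hx. rewrite !rpow_pos by auto. rewrite <- Rpower_plus.
  replace (p - 1 + (1 - p)) with 0 by ring. apply Rpower_O; auto.
Qed.

Lemma phi_derive al t : 0 < al -> 0 < t -> is_derive (fun t => rpow t al / al) t (rpow t (al - 1)).
Proof.
  intros Ha Ht.
  replace (rpow t (al - 1)) with (/al * (al * Rpower t (al - 1))).
  - apply is_derive_ext with (fun t => /al * rpow t al).
    + intros u. change (/al * rpow u al = rpow u al / al). unfold Rdiv; ring.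
    + apply is_derive_scal. apply rpow_derive; auto.
  - rewrite rpow_pos by auto. field; lra.
Qed.

Lemma rpow_cpt p x : 0 < p -> continuity_pt (fun t => rpow t p) x.
Proof. intros. apply continuity_pt_filterlim. apply rpow_cont; auto. Qed.

Lemma tangent al x y : 0 < al <= 1 -> 0 < y -> 0 <= x ->
  rpow x al <= rpow y al + al * rpow y (al - 1) * (x - y).
Proof.
  intros Ha Hy [Hx|Hx].
  - destruct (MVT_gen (fun t => rpow t al) y x (fun t => al * Rpower t (al - 1))) as [c [Hc Heq]].
    + intros z Hz. apply rpow_derive. assert (0 < Rmin y x) by (apply Rmin_glb_lt; lra). lra.
    + intros z Hz. apply rpow_cpt; lra.
    + simpl in Heq. rewrite (rpow_pos y (al-1)) by auto.
      assert (Hc0 : 0 < c). { destruct Hc as [Hc _]. apply Rlt_le_trans with (Rmin y x); auto.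
        apply Rmin_glb_lt; auto. }
      destruct (Rle_or_lt x y) as [Hxy|Hxy].
      * rewrite Rmin_right, Rmax_left in Hc by lra.
        assert (Rpower y (al-1) <= Rpower c (al-1)) by (apply Rpower_le_neg; lra).
        assert (0 <= al * (Rpower c (al-1) - Rpower y (al-1)) * (y - x)) by
          (apply Rmult_le_pos; [apply Rmult_le_pos|]; lra).
        nra.
      * rewrite Rmin_left, Rmax_right in Hc by lra.
        assert (Rpower c (al-1) <= Rpower y (al-1)) by (apply Rpower_le_neg; lra).
        assert (0 <= al * (Rpower y (al-1) - Rpower c (al-1)) * (x - y)) by
          (apply Rmult_le_pos; [apply Rmult_le_pos|]; lra).
        nra.
  - subst x. rewrite (rpow_nonpos 0) by lra. rewrite !rpow_pos by auto.
    assert (E : Rpower y (al - 1) * y = Rpower y al).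
    { rewrite <- (Rpower_1 y) at 2 by auto. rewrite <- Rpower_plus. f_equal; ring. }
    assert (0 < Rpower y al) by apply Rpower_gt0. nra.
Qed.

Lemma concave al a b th : 0 < al <= 1 -> 0 <= a -> 0 <= b -> 0 <= th <= 1 ->
  th * rpow a al + (1 - th) * rpow b al <= rpow (th * a + (1 - th) * b) al.
Proof.
  intros Ha Ha0 Hb0 Hth. set (y := th * a + (1 - th) * b).
  destruct (Rle_lt_or_eq_dec 0 y) as [Hy|Hy]; [unfold y; nra| |].
  - pose proof (tangent al a y Ha Hy Ha0). pose proof (tangent al b y Ha Hy Hb0).
    assert (E : th * (a - y) + (1 - th) * (b - y) = 0) by (unfold y; ring).
    assert (th * rpow a al + (1-th) * rpow b al <= rpow y al + al * rpow y (al-1) * (th * (a - y) + (1 - th) * (b - y))) by nra.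
    rewrite E in H1. lra.
  -
    assert (th * a = 0) by (unfold y in Hy; nra). assert ((1-th) * b = 0) by (unfold y in Hy; nra).
    rewrite <- Hy. rewrite (rpow_nonpos 0) by lra.
    destruct (Req_dec th 0) as [->|Ht]; [|].
    + replace b with 0 in * by nra. rewrite (rpow_nonpos 0) by lra. lra.
    + replace a with 0 by (apply Rmult_integral in H; destruct H; [contradiction|auto]).
      rewrite (rpow_nonpos 0) by lra.
      destruct (Req_dec th 1) as [->|Ht1]; [lra|].
      replace b with 0 by (apply Rmult_integral in H0; destruct H0; [lra|auto]).
      rewrite (rpow_nonpos 0) by lra. lra.
Qed.

Definition cwithin (a b : R) (f : R -> R) (x : R) :=
  forall eps, 0 < eps -> exists d, 0 < d /\ forall y, a <= y <= b -> Rabs (y - x) < d -> Rabs (f y - f x) < eps.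

Lemma conf_ball al a b f t l e :
  conf_deriv_pos al a b f t l -> 0 < e ->
  exists d, 0 < d /\ forall ep, ep <> 0 -> a <= t + ep * rpow t (1 - al) <= b -> Rabs ep < d ->
    Rabs ((f (t + ep * rpow t (1 - al)) - f t) / ep - l) < e.
Proof.
  intros H He. specialize (H _ (locally_ball l (mkposreal e He))).
  unfold filtermap, within in H. destruct H as [d Hd].
  exists d. split; [apply cond_pos|]. intros ep H1 H2 H3.
  assert (Hb : ball 0 d ep) by (unbg; rewrite Ropp_0, Rplus_0_r; auto).
  specialize (Hd ep Hb (conj H1 H2)). unb Hd. exact Hd.
Qed.

Lemma cwithin_conf al a b f t l : 0 < t -> conf_deriv_pos al a b f t l -> cwithin a b f t.
Proof.
  intros Ht H eps Heps. set (c := rpow t (1 - al)).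
  assert (Hc : 0 < c) by (unfold c; rewrite rpow_pos by auto; apply Rpower_gt0).
  destruct (conf_ball al a b f t l 1 H Rlt_0_1) as [d0 [Hd0 Hd]]. fold c in Hd.
  set (K := Rabs l + 1).
  assert (HK : 0 < K) by (unfold K; pose proof (Rabs_pos l); lra).
  exists (Rmin (d0 * c) (eps * c / K)). split.
  { apply Rmin_glb_lt; [nra| apply Rdiv_lt_0_compat; nra]. }
  intros y Hy Hyt.
  destruct (Req_dec y t) as [->|Hne].
  { rewrite Rminus_diag, Rabs_R0; auto. }
  set (ep := (y - t) / c).
  assert (Eq : t + ep * c = y) by (unfold ep; field; lra).
  assert (Hep : ep <> 0) by (unfold ep; intro E; apply Hne; unfold Rdiv in E;
     apply Rmult_integral in E; destruct E as [E|E]; [lra| apply Rinv_neq_0_compat in E; lra]).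
  assert (Habs : Rabs ep = Rabs (y - t) / c) by (unfold ep; rewrite Rabs_div, (Rabs_pos_eq c); lra).
  assert (Hlt1 : Rabs (y - t) < d0 * c) by (apply Rlt_le_trans with (1 := Hyt); apply Rmin_l).
  assert (Hlt2 : Rabs (y - t) < eps * c / K) by (apply Rlt_le_trans with (1 := Hyt); apply Rmin_r).
  assert (Hepd : Rabs ep < d0).
  { rewrite Habs. apply Rmult_lt_reg_r with c; auto. unfold Rdiv. rewrite Rmult_assoc, Rinv_l; lra. }
  specialize (Hd ep Hep). rewrite Eq in Hd. specialize (Hd Hy Hepd).
  assert (Eqf : f y - f t = ep * ((f y - f t) / ep)) by (field; auto).
  rewrite Eqf, Rabs_mult.
  assert (Rabs ((f y - f t) / ep) <= K).
  { unfold K. pose proof (Rabs_triang_inv ((f y - f t) / ep) l). lra. }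
  assert (Hepe : Rabs ep * K < eps).
  { rewrite Habs. apply Rmult_lt_reg_r with (c / K). apply Rdiv_lt_0_compat; lra.
    replace (Rabs (y - t) / c * K * (c / K)) with (Rabs (y - t)) by (field; lra).
    replace (eps * (c / K)) with (eps * c / K) by (field; lra). auto. }
  pose proof (Rabs_pos ep). pose proof (Rabs_pos ((f y - f t) / ep)). nra.
Qed.

Lemma deriv_conf al a b f t l : a < t < b -> 0 < t -> conf_deriv_pos al a b f t l ->
  is_derive f t (l / rpow t (1 - al)).
Proof.
  intros Htab Ht H. apply is_derive_Reals. set (c := rpow t (1 - al)).
  assert (Hc : 0 < c) by (unfold c; rewrite rpow_pos by auto; apply Rpower_gt0).
  intros eps Heps.
  destruct (conf_ball al a b f t l (eps * c) H ltac:(nra)) as [d0 [Hd0 Hd]]. fold c in Hd.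
  assert (Hdp : 0 < Rmin (d0 * c) (Rmin (t - a) (b - t))).
  { apply Rmin_glb_lt; [nra| apply Rmin_glb_lt; lra]. }
  exists (mkposreal _ Hdp). intros h Hh Hhd. simpl in Hhd.
  assert (Hh1 : Rabs h < d0 * c) by (apply Rlt_le_trans with (1 := Hhd); apply Rmin_l).
  assert (Hh2 : Rabs h < Rmin (t - a) (b - t)) by (apply Rlt_le_trans with (1 := Hhd); apply Rmin_r).
  assert (Hh3 : Rabs h < t - a) by (apply Rlt_le_trans with (1 := Hh2); apply Rmin_l).
  assert (Hh4 : Rabs h < b - t) by (apply Rlt_le_trans with (1 := Hh2); apply Rmin_r).
  apply Rabs_lt_between in Hh3. apply Rabs_lt_between in Hh4.
  set (ep := h / c).
  assert (Eq : t + ep * c = t + h) by (unfold ep; field; lra).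
  assert (Hep : ep <> 0) by (unfold ep; unfold Rdiv; intro E;
     apply Rmult_integral in E; destruct E as [E|E]; [lra| apply Rinv_neq_0_compat in E; lra]).
  assert (Habs : Rabs ep = Rabs h / c) by (unfold ep; rewrite Rabs_div, (Rabs_pos_eq c); lra).
  assert (Hepd : Rabs ep < d0).
  { rewrite Habs. apply Rmult_lt_reg_r with c; auto. unfold Rdiv. rewrite Rmult_assoc, Rinv_l; lra. }
  specialize (Hd ep Hep). rewrite Eq in Hd. specialize (Hd ltac:(lra) Hepd).
  replace ((f (t + h) - f t) / h - l / c) with (((f (t + h) - f t) / ep - l) / c)
    by (unfold ep; field; repeat split; lra).
  rewrite Rabs_div by lra. rewrite (Rabs_pos_eq c) by lra.
  apply Rmult_lt_reg_r with c; auto. unfold Rdiv. rewrite Rmult_assoc, Rinv_l by lra. lra.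
Qed.

Definition clamp (a b t : R) := Rmax a (Rmin b t).

Lemma clamp_in a b t : a <= b -> a <= clamp a b t <= b.
Proof. intros; unfold clamp, Rmax, Rmin; repeat destruct Rle_dec; lra. Qed.

Lemma clamp_id a b t : a <= t <= b -> clamp a b t = t.
Proof. intros; unfold clamp, Rmax, Rmin; repeat destruct Rle_dec; lra. Qed.

Lemma clamp_lip a b x y : a <= b -> Rabs (clamp a b y - clamp a b x) <= Rabs (y - x).
Proof.
  intros. unfold clamp, Rmax, Rmin, Rabs; repeat destruct Rle_dec; repeat destruct Rcase_abs; lra.
Qed.

Lemma fe_cont a b f x : a <= b -> cwithin a b f (clamp a b x) ->
  continuity_pt (fun t => f (clamp a b t)) x.
Proof.
  intros Hab Hc. apply continuity_pt_filterlim. apply filterlim_locally. intros eps.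
  destruct (Hc eps (cond_pos eps)) as [d [Hd H]].
  exists (mkposreal d Hd). intros y Hy. unb Hy. unbg. simpl in Hy.
  apply H. apply clamp_in; auto.
  eapply Rle_lt_trans; [apply clamp_lip; auto|]. exact Hy.
Qed.

Lemma mono_lemma (h : R -> R) s t : s <= t ->
  (forall x, s < x < t -> ex_derive h x /\ 0 <= Derive h x) ->
  (forall x, s <= x <= t -> continuity_pt h x) -> h s <= h t.
Proof.
  intros Hst Hd Hc.
  destruct (MVT_gen h s t (fun x => Rmax 0 (Derive h x))) as [c [_ Heq]].
  - intros x Hx. rewrite Rmin_left, Rmax_right in Hx by lra. destruct (Hd x Hx) as [He Hp].
    rewrite Rmax_right by auto. apply Derive_correct; auto.
  - intros x Hx. rewrite Rmin_left, Rmax_right in Hx by lra. auto.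
  - simpl in Heq. pose proof (Rmax_l 0 (Derive h c)). nra.
Qed.

Lemma phi_cpt al x : 0 < al -> continuity_pt (fun t => rpow t al / al) x.
Proof.
  intros Ha. change (continuity_pt ((fun t => rpow t al) / (fun _ => al))%F x).
  apply continuity_pt_div; [apply rpow_cpt; auto| apply continuity_pt_const; intros ? ?; auto| lra].
Qed.

Lemma cpt_minus f g x : continuity_pt f x -> continuity_pt g x -> continuity_pt (fun y => f y - g y) x.
Proof. apply continuity_pt_minus. Qed.
Lemma cpt_scal k f x : continuity_pt f x -> continuity_pt (fun y => k * f y) x.
Proof. apply continuity_pt_scal. Qed.

Lemma all_cwithin al a b f :
  0 <= a -> a < b -> conf_differentiable_on al a b f ->
  filterlim f (at_right a) (locally (f a)) ->
  forall x, a <= x <= b -> cwithin a b f x.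
Proof.
  intros Ha Hab Hd Hc x Hx. destruct (Req_dec x a) as [->|Hne].
  - intros eps Heps. specialize (Hc _ (locally_ball (f a) (mkposreal eps Heps))).
    unfold filtermap, at_right, within in Hc. destruct Hc as [d Hd'].
    exists d. split; [apply cond_pos|]. intros y Hy Hya.
    destruct (Req_dec y a) as [->|Hya'].
    + rewrite Rminus_diag, Rabs_R0; auto.
    + assert (Hb : ball a d y) by (unbg; auto). specialize (Hd' y Hb ltac:(lra)). unb Hd'. exact Hd'.
  - destruct (Hd x Hx) as [l [[Hx0 H]|[Hx0 _]]]; [|lra].
    eapply cwithin_conf; eauto.
Qed.

Lemma interior_deriv al a b m M f :
  0 <= a -> conf_differentiable_on al a b f ->
  (forall t l, a <= t <= b -> conf_deriv al a b f t l -> m <= l <= M) ->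
  forall x, a < x < b -> exists l, m <= l <= M /\ is_derive (fun t => f (clamp a b t)) x (l / rpow x (1 - al)).
Proof.
  intros Ha Hd Hbd x Hx. destruct (Hd x ltac:(lra)) as [l Hl].
  exists l. split; [apply (Hbd x l); auto; lra|].
  destruct Hl as [[Hx0 H]|[Hx0 _]]; [|lra].
  apply is_derive_ext_loc with f.
  - exists (mkposreal (Rmin (x - a) (b - x)) ltac:(apply Rmin_glb_lt; lra)). intros y Hy. unb Hy. simpl in Hy.
    assert (Rabs (y - x) < x - a) by (eapply Rlt_le_trans; [exact Hy| apply Rmin_l]).
    assert (Rabs (y - x) < b - x) by (eapply Rlt_le_trans; [exact Hy| apply Rmin_r]).
    rewrite clamp_id; auto. split; apply Rabs_lt_between in H0; apply Rabs_lt_between in H1; lra.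
  - apply deriv_conf with a b; auto; lra.
Qed.

Lemma tlip al a b m M f : 0 < al <= 1 -> 0 <= a -> a < b ->
  conf_differentiable_on al a b f ->
  (forall t l, a <= t <= b -> conf_deriv al a b f t l -> m <= l <= M) ->
  filterlim f (at_right a) (locally (f a)) ->
  forall s t, a <= s <= t -> t <= b ->
    m * (rpow t al / al - rpow s al / al) <= f t - f s <= M * (rpow t al / al - rpow s al / al).
Proof.
  intros Hal Ha Hab Hd Hbd Hc s t Hs Ht.
  assert (Hcont : forall x, continuity_pt (fun t => f (clamp a b t)) x).
  { intros x. apply fe_cont; [lra|]. apply (all_cwithin al); auto. apply clamp_in; lra. }
  assert (Hft : f t = f (clamp a b t)) by (rewrite clamp_id; auto; lra).
  assert (Hfs : f s = f (clamp a b s)) by (rewrite clamp_id; auto; lra).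
  rewrite Hft, Hfs. split.
  - pose proof (mono_lemma (fun x => f (clamp a b x) - m * (rpow x al / al)) s t) as HH.
    simpl in HH. cut (f (clamp a b s) - m * (rpow s al / al) <= f (clamp a b t) - m * (rpow t al / al)); [lra|].
    apply HH; [lra| |].
    + intros x Hx. destruct (interior_deriv al a b m M f Ha Hd Hbd x ltac:(lra)) as [l [Hl Hder]].
      assert (Hx0 : 0 < x) by lra.
      assert (HD : is_derive (fun x => f (clamp a b x) - m * (rpow x al / al)) x
                     (l / rpow x (1 - al) - m * rpow x (al - 1))).
      { apply (is_derive_minus (fun x => f (clamp a b x)) (fun x => m * (rpow x al / al))); auto.
        apply is_derive_scal. apply phi_derive; lra. }
      split; [eexists; exact HD|]. eapply Rle_trans; [|right; symmetry; exact (is_derive_unique _ _ _ HD)].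
      pose proof (rpow_inv x al Hx0). assert (0 < rpow x (1 - al)) by (rewrite rpow_pos by lra; apply Rpower_gt0).
      replace (rpow x (al - 1)) with (/ rpow x (1 - al)) by (field_simplify_eq; lra).
      unfold Rdiv. rewrite <- Rmult_minus_distr_r. apply Rmult_le_pos; [lra| left; apply Rinv_0_lt_compat; lra].
    + intros x Hx. apply cpt_minus; auto. apply cpt_scal. apply phi_cpt; lra.
  - pose proof (mono_lemma (fun x => M * (rpow x al / al) - f (clamp a b x)) s t) as HH.
    simpl in HH. cut (M * (rpow s al / al) - f (clamp a b s) <= M * (rpow t al / al) - f (clamp a b t)); [lra|].
    apply HH; [lra| |].
    + intros x Hx. destruct (interior_deriv al a b m M f Ha Hd Hbd x ltac:(lra)) as [l [Hl Hder]].
      assert (Hx0 : 0 < x) by lra.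
      assert (HD : is_derive (fun x => M * (rpow x al / al) - f (clamp a b x)) x
                     (M * rpow x (al - 1) - l / rpow x (1 - al))).
      { apply (is_derive_minus (fun x => M * (rpow x al / al)) (fun x => f (clamp a b x))); auto.
        apply is_derive_scal. apply phi_derive; lra. }
      split; [eexists; exact HD|]. eapply Rle_trans; [|right; symmetry; exact (is_derive_unique _ _ _ HD)].
      pose proof (rpow_inv x al Hx0). assert (0 < rpow x (1 - al)) by (rewrite rpow_pos by lra; apply Rpower_gt0).
      replace (rpow x (al - 1)) with (/ rpow x (1 - al)) by (field_simplify_eq; lra).
      unfold Rdiv. replace (M * / rpow x (1 - al) - l * / rpow x (1 - al)) with ((M - l) * / rpow x (1 - al)) by ring.
      apply Rmult_le_pos; [lra| left; apply Rinv_0_lt_compat; lra].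
    + intros x Hx. apply cpt_minus; auto. apply cpt_scal. apply phi_cpt; lra.
Qed.

Lemma is_RInt_lin p q r x y :
  is_RInt (fun u => p + q * (u - r)) x y (p * (y - x) + q * ((y - r)^2 - (x - r)^2) / 2).
Proof.
  replace (p * (y - x) + q * ((y - r)^2 - (x - r)^2) / 2) with
    (minus ((fun u => p * u + q * (u - r)^2 / 2) y) ((fun u => p * u + q * (u - r)^2 / 2) x))
    by (unfold minus, plus, opp; simpl; field).
  apply (is_RInt_derive (fun u => p * u + q * (u - r)^2 / 2) (fun u => p + q * (u - r))).
  - intros u _. auto_derive; auto. field.
  - intros u _. apply (ex_derive_continuous (K:=R_AbsRing) (V:=R_NormedModule)). auto_derive; auto.
Qed.

Lemma RInt_lin p q r x y :
  RInt (fun u => p + q * (u - r)) x y = p * (y - x) + q * ((y - r)^2 - (x - r)^2) / 2.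
Proof. apply is_RInt_unique, is_RInt_lin. Qed.

Lemma ex_RInt_lin p q r x y : ex_RInt (fun u => p + q * (u - r)) x y.
Proof. eexists; apply is_RInt_lin. Qed.

Lemma ubounds (F : R -> R) A Bb m M : A < Bb -> m < M -> (forall u, continuous F u) ->
  (forall u v, A <= u -> u <= v -> v <= Bb -> m * (v - u) <= F v - F u <= M * (v - u)) ->
  let L := Bb - A in let lam := (F Bb - F A - m * L) / (M - m) in
  0 <= lam <= L /\
  m / 2 * L ^ 2 + (M - m) / 2 * lam ^ 2 <= RInt F A Bb - F A * L /\
  RInt F A Bb - F A * L <= M / 2 * L ^ 2 - (M - m) / 2 * (L - lam) ^ 2.
Proof.
  intros HAB HmM Hc Hl L lam.
  assert (HexF : forall x y, ex_RInt F x y) by (intros; apply (ex_RInt_continuous (V:=R_CompleteNormedModule)); auto).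
  destruct (Hl A Bb) as [H1 H2]; try lra.
  assert (Hlam : 0 <= lam <= L).
  { unfold lam, L. split.
    - apply Rmult_le_pos; [lra| left; apply Rinv_0_lt_compat; lra].
    - apply Rmult_le_reg_r with (M - m); [lra|]. unfold Rdiv. rewrite Rmult_assoc, Rinv_l; lra. }
  assert (Hfb : F Bb = F A + m * L + (M - m) * lam) by (unfold lam, L; field; lra).
  split; auto.
  split.
  - set (c := Bb - lam).
    rewrite <- (RInt_Chasles F A c Bb) by auto.
    assert (I1 : RInt (fun u => F A + m * (u - A)) A c <= RInt F A c).
    { apply RInt_le; auto; [unfold c, L in *; lra| apply ex_RInt_lin|].
      intros x Hx. destruct (Hl A x); unfold c, L in *; lra. }
    assert (I2 : RInt (fun u => F Bb + M * (u - Bb)) c Bb <= RInt F c Bb).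
    { apply RInt_le; auto; [unfold c, L in *; lra| apply ex_RInt_lin|].
      intros x Hx. destruct (Hl x Bb); unfold c, L in *; lra. }
    rewrite RInt_lin in I1, I2. unfold plus; simpl.
    assert (E : (F A * (c - A) + m * ((c - A) ^ 2 - (A - A) ^ 2) / 2) +
                (F Bb * (Bb - c) + M * ((Bb - Bb) ^ 2 - (c - Bb) ^ 2) / 2) - F A * L
                = m / 2 * L ^ 2 + (M - m) / 2 * lam ^ 2)
      by (rewrite Hfb; unfold c, L; field).
    lra.
  - set (c := A + lam).
    rewrite <- (RInt_Chasles F A c Bb) by auto.
    assert (I1 : RInt F A c <= RInt (fun u => F A + M * (u - A)) A c).
    { apply RInt_le; auto; [unfold c, L in *; lra| apply ex_RInt_lin|].
      intros x Hx. destruct (Hl A x); unfold c, L in *; lra. }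
    assert (I2 : RInt F c Bb <= RInt (fun u => F Bb + m * (u - Bb)) c Bb).
    { apply RInt_le; auto; [unfold c, L in *; lra| apply ex_RInt_lin|].
      intros x Hx. destruct (Hl x Bb); unfold c, L in *; lra. }
    rewrite RInt_lin in I1, I2. unfold plus; simpl.
    assert (E : (F A * (c - A) + M * ((c - A) ^ 2 - (A - A) ^ 2) / 2) +
                (F Bb * (Bb - c) + m * ((Bb - Bb) ^ 2 - (c - Bb) ^ 2) / 2) - F A * L
                = M / 2 * L ^ 2 - (M - m) / 2 * (L - lam) ^ 2)
      by (rewrite Hfb; unfold c, L; field).
    lra.
Qed.

Theorem mainTheorem11 (alpha a b m M : R) (f : R -> R)
  (Halpha : 0 < alpha <= 1) (Ha : 0 <= a) (Hab : a < b) (HmM : m < M)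
  (Hdiff : conf_differentiable_on alpha a b f)
  (Hbounds : forall t l, a <= t <= b -> conf_deriv alpha a b f t l -> m <= l <= M)
  (Hcont : filterlim f (at_right a) (locally (f a))) :
  let B := (rpow b alpha - rpow a alpha) / alpha in
  let ell := alpha * (b - a) / ((rpow b alpha - rpow a alpha) * (M - m))
             * (f b - f a - m * B) in
  exists I : R,
    is_RInt_gen (fun t => f t * rpow t (alpha - 1)) (at_right a) (at_point b) I /\
    m / 2 * B ^ 2 + (M - m) / 2 * ((rpow b alpha - rpow (b - ell) alpha) / alpha) ^ 2
      <= I - f a * B /\
    I - f a * B
      <= M / 2 * B ^ 2 + (m - M) / 2 * ((rpow b alpha - rpow (a + ell) alpha) / alpha) ^ 2.
Proof.
  intros B ell.
  set (al := alpha) in *.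
  set (A := rpow a al / al). set (Bb := rpow b al / al).
  set (psi := fun u => rpow (al * u) (1 / al)).
  set (F := fun u => f (clamp a b (psi u))).
  assert (Hal : 0 < al) by lra.
  assert (HA0 : 0 <= A) by (unfold A; apply Rmult_le_pos; [apply rpow_ge0| left; apply Rinv_0_lt_compat; lra]).
  assert (HAB : A < Bb).
  { unfold A, Bb, Rdiv. apply Rmult_lt_compat_r; [apply Rinv_0_lt_compat; lra|]. apply rpow_smono; lra. }
  assert (HpsiA : psi A = a) by (unfold psi, A; apply psi_phi; lra).
  assert (HpsiB : psi Bb = b) by (unfold psi, Bb; apply psi_phi; lra).
  assert (Hpsimono : forall u v, 0 <= u -> u <= v -> psi u <= psi v).
  { intros u v Hu Huv. unfold psi. apply rpow_mono; [apply Rdiv_lt_0_compat; lra|]. nra. }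
  assert (Hphipsi : forall u, 0 <= u -> rpow (psi u) al / al = u) by (intros; unfold psi; apply phi_psi; lra).
  assert (Hfecont : forall x, continuity_pt (fun t => f (clamp a b t)) x).
  { intros x. apply fe_cont; [lra|]. apply (all_cwithin al); auto. apply clamp_in; lra. }
  assert (HFcont : forall u, continuous F u).
  { intros u. unfold F. apply (continuous_comp psi (fun t => f (clamp a b t))).
    - unfold psi. apply (continuous_comp (fun u => al * u) (fun x => rpow x (1 / al))).
      + apply (ex_derive_continuous (K:=R_AbsRing) (V:=R_NormedModule)). auto_derive; auto.
      + apply rpow_cont. apply Rdiv_lt_0_compat; lra.
    - apply continuity_pt_filterlim. auto. }
  assert (HFl : forall u v, A <= u -> u <= v -> v <= Bb -> m * (v - u) <= F v - F u <= M * (v - u)).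
  { intros u v H1 H2 H3.
    assert (a <= psi u) by (rewrite <- HpsiA; apply Hpsimono; lra).
    assert (psi u <= psi v) by (apply Hpsimono; lra).
    assert (psi v <= b) by (rewrite <- HpsiB; apply Hpsimono; lra).
    unfold F. rewrite !clamp_id by lra.
    pose proof (tlip al a b m M f Halpha Ha Hab Hdiff Hbounds Hcont (psi u) (psi v) ltac:(lra) ltac:(lra)) as HH.
    rewrite !Hphipsi in HH by lra. exact HH. }
  assert (HFA : F A = f a) by (unfold F; rewrite HpsiA, clamp_id; lra).
  assert (HFB : F Bb = f b) by (unfold F; rewrite HpsiB, clamp_id; lra).
  pose proof (ubounds F A Bb m M HAB HmM HFcont HFl) as Hub. simpl in Hub.
  rewrite HFA, HFB in Hub.
  set (L := Bb - A) in *. set (lam := (f b - f a - m * L) / (M - m)) in *.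
  destruct Hub as [Hlam [Hlow Hupp]].
  set (P := fun u => RInt F 0 u).
  assert (HexF : forall x y, ex_RInt F x y) by (intros; apply (ex_RInt_continuous (V:=R_CompleteNormedModule)); auto).
  assert (HPd : forall u, is_derive P u (F u)).
  { intros u. apply is_derive_RInt with 0; auto.
    apply filter_forall. intros x. apply RInt_correct; auto. }
  set (G := fun t => P (rpow t al / al)).
  assert (HGd : forall t, 0 < t -> is_derive G t (F (rpow t al / al) * rpow t (al - 1))).
  { intros t Ht. unfold G.
    replace (F (rpow t al / al) * rpow t (al - 1)) with (scal (rpow t (al - 1)) (F (rpow t al / al)))
      by (unfold scal; simpl; unfold mult; simpl; ring).
    apply (is_derive_comp P (fun t => rpow t al / al)); auto. apply phi_derive; auto. }
  assert (HGint : forall x, a < x < b -> is_RInt (fun t => f t * rpow t (al - 1)) x b (G b - G x)).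
  { intros x Hx.
    apply is_RInt_ext with (fun t => F (rpow t al / al) * rpow t (al - 1)).
    - intros t Ht. rewrite Rmin_left, Rmax_right in Ht by lra. unfold F, psi.
      rewrite psi_phi by lra. rewrite clamp_id by lra. reflexivity.
    - apply (is_RInt_derive G (fun t => F (rpow t al / al) * rpow t (al - 1))).
      + intros t Ht. rewrite Rmin_left, Rmax_right in Ht by lra. apply HGd. lra.
      + intros t Ht. rewrite Rmin_left, Rmax_right in Ht by lra.
        apply (continuous_mult (fun t => F (rpow t al / al)) (fun t => rpow t (al - 1))).
        * apply (continuous_comp (fun t => rpow t al / al) F); auto.
          apply continuity_pt_filterlim, phi_cpt; auto.
        * apply (ex_derive_continuous (K:=R_AbsRing) (V:=R_NormedModule)). eexists. apply rpow_derive. lra. }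
  assert (HGc : continuous G a).
  { apply (continuous_comp (fun t => rpow t al / al) P).
    - apply continuity_pt_filterlim, phi_cpt; auto.
    - apply (ex_derive_continuous (K:=R_AbsRing) (V:=R_NormedModule)). eexists. apply HPd. }
  assert (HI : G b - G a = RInt F A Bb).
  { unfold G, P. fold A Bb. rewrite <- (RInt_Chasles F 0 A Bb) by auto. unfold plus; simpl. ring. }
  exists (G b - G a). split.
  - intros Pset [eps Heps].
    pose proof (proj1 (filterlim_locally G (G a)) HGc eps) as [d Hd].
    apply Filter_prod with (fun x => a < x /\ ball a d x /\ x < b) (fun y => y = b).
    + exists (mkposreal (Rmin d (b - a)) ltac:(apply Rmin_glb_lt; [apply cond_pos| lra])).
      intros y Hy Hay. simpl in Hy. unb Hy. split; auto. split.
      * unbg. eapply Rlt_le_trans; [exact Hy| apply Rmin_l].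
      * assert (Rabs (y + - a) < b - a) by (eapply Rlt_le_trans; [exact Hy| apply Rmin_r]).
        apply Rabs_lt_between in H. lra.
    + reflexivity.
    + intros x y [Hx1 [Hx2 Hx3]] ->. simpl. exists (G b - G x). split.
      * apply HGint; lra.
      * apply Heps. specialize (Hd x Hx2). unb Hd. unbg.
        replace (G b - G x + - (G b - G a)) with (- (G x + - G a)) by ring. rewrite Rabs_Ropp. exact Hd.
  - rewrite HI.
    assert (Hrab : rpow a al < rpow b al) by (apply rpow_smono; lra).
    assert (HBL : B = L) by (unfold B, L, Bb, A; field; lra).
    assert (HL0 : 0 < L) by (unfold L; lra).
    set (th := lam / L).
    assert (Hth : 0 <= th <= 1).
    { unfold th. split; [apply Rmult_le_pos; [lra| left; apply Rinv_0_lt_compat; lra]|].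
      apply Rmult_le_reg_r with L; auto. unfold Rdiv. rewrite Rmult_assoc, Rinv_l; lra. }
    assert (Hell : ell = th * (b - a)).
    { unfold ell, th, lam. rewrite <- HBL. unfold B. field. repeat split; lra. }
    assert (HLr : rpow b al - rpow a al = al * L) by (rewrite <- HBL; unfold B; field; lra).
    assert (E1 : b - ell = th * a + (1 - th) * b) by (rewrite Hell; ring).
    assert (E2 : a + ell = (1 - th) * a + (1 - (1 - th)) * b) by (rewrite Hell; ring).
    pose proof (concave al a b th Halpha Ha ltac:(lra) Hth) as C1.
    pose proof (concave al a b (1 - th) Halpha Ha ltac:(lra) ltac:(lra)) as C2.
    rewrite <- E1 in C1. rewrite <- E2 in C2.
    assert (M1 : rpow (b - ell) al <= rpow b al) by (apply rpow_mono; nra).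
    assert (M2 : rpow (a + ell) al <= rpow b al) by (apply rpow_mono; nra).
    set (X := (rpow b al - rpow (b - ell) al) / al).
    set (Y := (rpow b al - rpow (a + ell) al) / al).
    assert (HX : 0 <= X <= lam).
    { unfold X. split; [apply Rmult_le_pos; [lra| left; apply Rinv_0_lt_compat; lra]|].
      apply Rmult_le_reg_r with al; auto. unfold Rdiv. rewrite Rmult_assoc, Rinv_l by lra.
      assert (th * (rpow b al - rpow a al) = al * lam) by (rewrite HLr; unfold th; field; lra). nra. }
    assert (HY : 0 <= Y <= L - lam).
    { unfold Y. split; [apply Rmult_le_pos; [lra| left; apply Rinv_0_lt_compat; lra]|].
      apply Rmult_le_reg_r with al; auto. unfold Rdiv. rewrite Rmult_assoc, Rinv_l by lra.
      assert ((1 - th) * (rpow b al - rpow a al) = al * (L - lam)) by (rewrite HLr; unfold th; field; lra). nra. }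
    rewrite HBL.
    assert (X ^ 2 <= lam ^ 2) by nra. assert (Y ^ 2 <= (L - lam) ^ 2) by nra.
    split; nra.
Qed.
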